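(* Let $G$ be a $\sigma$-compact locally compact Abelian group, $C>0$, let $\{P_\varepsilon\}_{0<\varepsilon<C}$ be a family of subsets of $G$ and $L\le G$ a subgroup satisfying (A1)–(A5) below. Then there is a unique Hausdorff-or-not group topology on $L$ for which $\{P_\varepsilon\}_{0<\varepsilon<C}$ is a neighbourhood basis of $0$; let $H$ be the (Hausdorff) completion of $L$ with respect to this (uniform) topology and $\phi: L\to H$ the completion map. Then $H$ is a locally compact Abelian group, the set $\widetilde{L}:=\{(t,\phi(t)) : t\in L\}$ is a lattice in $G\times H$, and $(G\times H,\widetilde{L})$ is a cut and project scheme, with $\pi_1(\widetilde L)=L$ and star map $\phi$. The conditions are: (A1) $0\in P_\varepsilon=-P_\varepsilon$ for all $0<\varepsilon<C$; (A2) each $P_\varepsilon$ ($0<\varepsilon<C$) is locally finite in $G$; (A3) $P_\varepsilon+P_{\varepsilon'}\subset P_{\varepsilon+\varepsilon'}$ whenever $\varepsilon,\varepsilon'>0$, $\varepsilon+\varepsilon'<C$; (A4) each $P_\varepsilon$ ($0<\varepsilon<C$) is relatively dense in $G$; (A5) $P_\varepsilon\subset L$ for all $0<\varepsilon<C$.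
   Context: A subset $A\subset G$ is locally finite if $A\cap K$ is finite for every compact $K$; relatively dense if $A+K=G$ for some compact $K$. A lattice in a locally compact Abelian group is a discrete subgroup that is relatively dense (equivalently, cocompact). A cut and project scheme $(G\times H,\widetilde L)$ consists of locally compact Abelian groups $G,H$ and a lattice $\widetilde L\subset G\times H$ such that the projection $\pi_1:G\times H\to G$ is injective on $\widetilde L$ and $\pi_2(\widetilde L)$ is dense in $H$; the star map $\star:\pi_1(\widetilde L)\to H$ is $x\mapsto x^\star:=\pi_2((\pi_1|_{\widetilde L})^{-1}(x))$. *)

(* Defs.v *)
From HB Require Import structures.
From mathcomp Require Import all_boot all_algebra.
From Stdlib Require Import Reals List.
Set Implicit Arguments. Unset Strict Implicit. Unset Printing Implicit Defensive.
Import GRing.Theory.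
Local Open Scope ring_scope.

Definition set (T : Type) := T -> Prop.

Definition is_topology_on (T : Type) (X : set T) (op : set T -> Prop) : Prop :=
  (forall U, op U -> forall x, U x -> X x) /\
  op X /\
  (forall (I : Type) (F : I -> set T), (forall i, op (F i)) ->
      op (fun x => exists i, F i x)) /\
  (forall U V, op U -> op V -> op (fun x => U x /\ V x)).

Definition is_topology (T : Type) (op : set T -> Prop) :=
  is_topology_on (fun _ => True) op.

Definition nbhd (T : Type) (op : set T -> Prop) (x : T) (U : set T) : Prop :=
  exists V, op V /\ V x /\ (forall y, V y -> U y).

Definition hausdorff (T : Type) (op : set T -> Prop) : Prop :=
  forall x y : T, x <> y ->
    exists U V, nbhd op x U /\ nbhd op y V /\ (forall z, U z -> V z -> False).

Definition compact (T : Type) (op : set T -> Prop) (K : set T) : Prop :=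
  forall (I : Type) (F : I -> set T), (forall i, op (F i)) ->
    (forall x, K x -> exists i, F i x) ->
    exists s : list I, forall x, K x -> exists i, List.In i s /\ F i x.

Definition locally_compact (T : Type) (op : set T -> Prop) : Prop :=
  forall x, exists K, compact op K /\ nbhd op x K.

Definition sigma_compact (T : Type) (op : set T -> Prop) : Prop :=
  exists K : nat -> set T, (forall n, compact op (K n)) /\ forall x, exists n, K n x.

Definition dense (T : Type) (op : set T -> Prop) (D : set T) : Prop :=
  forall U, op U -> (exists x, U x) -> exists x, U x /\ D x.

Definition prod_top (A B : Type) (opA : set A -> Prop) (opB : set B -> Prop)
  : set (A * B) -> Prop :=
  fun W => forall p, W p -> exists U V, opA U /\ opB V /\ U p.1 /\ V p.2 /\
     (forall a b, U a -> V b -> W (a, b)).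

Definition subgroup (G : zmodType) (L : set G) : Prop :=
  L 0 /\ forall x y, L x -> L y -> L (x - y).

Definition group_topology_on (G : zmodType) (L : set G) (op : set G -> Prop) : Prop :=
  is_topology_on L op /\
  (forall x y U, L x -> L y -> nbhd op (x + y) U ->
     exists V W, nbhd op x V /\ nbhd op y W /\
       forall a b, V a -> W b -> U (a + b)) /\
  (forall x U, L x -> nbhd op (- x) U ->
     exists V, nbhd op x V /\ forall a, V a -> U (- a)).

Definition group_topology (G : zmodType) (op : set G -> Prop) :=
  group_topology_on (fun _ => True) op.

Definition LCA_group (G : zmodType) (op : set G -> Prop) : Prop :=
  group_topology op /\ hausdorff op /\ locally_compact op.

Definition proper_filter (T : Type) (F : set T -> Prop) : Prop :=
  F (fun _ => True) /\
  (forall A B, F A -> (forall x, A x -> B x) -> F B) /\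
  (forall A B, F A -> F B -> F (fun x => A x /\ B x)) /\
  ~ F (fun _ => False).

Definition cauchy_filter (H : zmodType) (op : set H -> Prop) (F : set H -> Prop) :=
  forall U, nbhd op 0 U -> exists A, F A /\ forall a b, A a -> A b -> U (a - b).

Definition filter_converges (T : Type) (op : set T -> Prop) (F : set T -> Prop) (x : T) :=
  forall U, nbhd op x U -> F U.

Definition complete_group (H : zmodType) (op : set H -> Prop) : Prop :=
  forall F, proper_filter F -> cauchy_filter op F -> exists x, filter_converges op F x.

Definition locally_finite (G : zmodType) (op : set G -> Prop) (A : set G) : Prop :=
  forall K, compact op K -> exists s : list G, forall x, A x -> K x -> List.In x s.

Definition relatively_dense (G : zmodType) (op : set G -> Prop) (A : set G) : Prop :=
  exists K, compact op K /\ forall x, exists a k, A a /\ K k /\ x = a + k.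

Definition discrete (T : Type) (op : set T -> Prop) (A : set T) : Prop :=
  forall x, A x -> exists U, op U /\ U x /\ forall y, U y -> A y -> y = x.

Definition lattice (G : zmodType) (op : set G -> Prop) (A : set G) : Prop :=
  subgroup A /\ discrete op A /\ relatively_dense op A.

Definition cut_and_project (G H : zmodType) (opG : set G -> Prop) (opH : set H -> Prop)
  (Lt : set (G * H)) : Prop :=
  LCA_group opG /\ LCA_group opH /\
  lattice (prod_top opG opH) Lt /\
  (forall p q, Lt p -> Lt q -> p.1 = q.1 -> p = q) /\
  dense opH (fun y => exists x, Lt (x, y)).

Definition P_topology (G : zmodType) (C : R) (P : R -> set G) (L : set G)
  (opL : set G -> Prop) : Prop :=
  group_topology_on L opL /\
  (forall e, Rlt 0 e -> Rlt e C -> nbhd opL 0 (P e)) /\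
  (forall U, nbhd opL 0 U -> exists e, Rlt 0 e /\ Rlt e C /\ forall x, P e x -> U x).

(* (H, phi) is the Hausdorff completion of L w.r.t. the uniform P_eps-topology:
   H is a complete Hausdorff topological abelian group, phi : L -> H is a
   homomorphism with dense image, and the P_eps-uniformity on L is the one
   induced by phi. (phi is given as a function on G; only its values on L matter.) *)
Definition is_completion (G : zmodType) (C : R) (P : R -> set G) (L : set G)
  (H : zmodType) (opH : set H -> Prop) (phi : G -> H) : Prop :=
  group_topology opH /\ hausdorff opH /\ complete_group opH /\
  (forall x y, L x -> L y -> phi (x + y) = phi x + phi y) /\
  dense opH (fun h => exists t, L t /\ h = phi t) /\
  (forall V, nbhd opH 0 V -> exists e, Rlt 0 e /\ Rlt e C /\ forall x, P e x -> V (phi x)) /\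
  (forall e, Rlt 0 e -> Rlt e C ->
     exists V, nbhd opH 0 V /\ forall x, L x -> V (phi x) -> P e x).

Definition Ltilde (G H : zmodType) (L : set G) (phi : G -> H) : set (G * H) :=
  fun p => L p.1 /\ p.2 = phi p.1.

(* Main.v *)
Require Import Defs.
From HB Require Import structures.
From mathcomp Require Import all_boot all_algebra.
From mathcomp Require boolp.
From Stdlib Require Import Reals List.
From Stdlib Require Import Lra Lia.
From Stdlib Require Import Classical ClassicalEpsilon ProofIrrelevance FunctionalExtensionality PropExtensionality.
Import GRing.Theory.
Set Warnings "-notation-overridden,-ambiguous-paths".

Section RealsAux.
Local Open Scope R_scope.
Definition dd (C : R) (n : nat) := C / (8 * (INR n + 1)).
Lemma dd_pos C n : 0 < C -> 0 < dd C n.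
Proof. move=> C0; unfold dd; apply Rdiv_lt_0_compat; first lra. have := pos_INR n; lra. Qed.
Lemma dd_mono C n m : 0 < C -> (n <= m)%nat -> dd C m <= dd C n.
Proof.
move=> C0 /leP nm; unfold dd, Rdiv; apply Rmult_le_compat_l; first lra.
apply Rinv_le_contravar; first (have := pos_INR n; lra).
have := le_INR _ _ nm; lra.
Qed.
Lemma dd_le C n : 0 < C -> dd C n <= C / 8.
Proof. move=> C0; have := dd_mono C 0 n C0 (leq0n n); unfold dd; simpl; lra. Qed.
Lemma dd_small C eps : 0 < C -> 0 < eps -> exists n, 6 * dd C n < eps.
Proof.
move=> C0 e0; have [N [HN N0]] := archimed_cor1 (eps / C) ltac:(apply Rdiv_lt_0_compat; lra).
exists N; unfold dd.
have hN : 0 < INR N by apply lt_0_INR; lia.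
have h1 : / (8 * (INR N + 1)) <= / 8 * / INR N.
  rewrite -Rinv_mult; apply Rinv_le_contravar; nra.
have h2 : C * / INR N < eps.
  have := Rmult_lt_compat_l C _ _ C0 HN.
  have -> : C * (eps / C) = eps by field; lra.
  done.
unfold Rdiv; have := Rmult_le_compat_l C _ _ (Rlt_le _ _ C0) h1; nra.
Qed.

End RealsAux.

Set Implicit Arguments. Unset Strict Implicit. Unset Printing Implicit Defensive.
Local Open Scope ring_scope.

Lemma maxl N1 N2 n : (maxn N1 N2 <= n)%nat -> (N1 <= n)%nat.
Proof. by rewrite geq_max => /andP []. Qed.
Lemma maxr N1 N2 n : (maxn N1 N2 <= n)%nat -> (N2 <= n)%nat.
Proof. by rewrite geq_max => /andP []. Qed.

Section GenTop.
Variables (M : zmodType) (op : set M -> Prop).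

Lemma nbhd_sup x (U V : set M) : nbhd op x U -> (forall y, U y -> V y) -> nbhd op x V.
Proof. move=> [W [oW [Wx WU]]] UV; exists W; split=> //; split=> // y /WU; exact: UV. Qed.

Lemma nbhd_pt x (U : set M) : nbhd op x U -> U x.
Proof. by move=> [W [_ [Wx WU]]]; apply: WU. Qed.

Lemma open_nbhd x (U : set M) : op U -> U x -> nbhd op x U.
Proof. by move=> oU Ux; exists U. Qed.

Variable X : set M.
Hypothesis hX : subgroup X.
Hypothesis hop : group_topology_on X op.

Lemma nbhd_X x U : nbhd op x U -> X x.
Proof. move: hop => [[sub _] _] [W [oW [Wx _]]]; exact: (sub W oW x Wx). Qed.

Lemma subX0 : X 0. Proof. by case: hX. Qed.
Lemma subXN x : X x -> X (- x).
Proof. move=> Xx; case: hX => X0 XB; rewrite -sub0r; exact: XB. Qed.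
Lemma subXD x y : X x -> X y -> X (x + y).
Proof. move=> Xx Xy; case: hX => X0 XB; rewrite -(opprK y); apply: XB => //; exact: subXN. Qed.

Lemma nbhd_cap x U V : nbhd op x U -> nbhd op x V -> nbhd op x (fun z => U z /\ V z).
Proof.
move: hop => [[_ [_ [_ capo]]] _] [U' [oU [U'x U'U]]] [V' [oV [V'x V'V]]].
exists (fun z => U' z /\ V' z); split; first exact: capo.
split=> // z [/U'U ? /V'V ?]; done.
Qed.

Lemma nbhd_shift x U : X x -> (nbhd op x U <-> nbhd op 0 (fun k => U (x + k))).
Proof.
move=> Xx; move: hop => [_ [cadd _]]; split.
- move=> nU; have : nbhd op (x + 0) U by rewrite addr0.
  move=> /(cadd _ _ _ Xx subX0) [V [W [nV [nW VW]]]].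
  apply: (nbhd_sup nW) => k Wk; apply: VW => //; exact: nbhd_pt nV.
- move=> nU; have : nbhd op (- x + x) (fun k => U (x + k)) by rewrite addNr.
  move=> /(cadd _ _ _ (subXN Xx) Xx) [V [W [nV [nW VW]]]].
  apply: (nbhd_sup nW) => k Wk; have := VW _ _ (nbhd_pt nV) Wk.
  by rewrite addrA addrN add0r.
Qed.

Lemma nbhd_neg0 U : nbhd op 0 U -> nbhd op 0 (fun k => U (- k)).
Proof.
move=> nU; move: hop => [_ [_ cneg]].
have : nbhd op (- 0) U by rewrite oppr0.
move=> /(cneg _ _ subX0) [V [nV VU]]; exact: (nbhd_sup nV).
Qed.

Lemma nbhd_add0 U : nbhd op 0 U -> exists V W, nbhd op 0 V /\ nbhd op 0 W /\
  forall a b, V a -> W b -> U (a + b).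
Proof.
move=> nU; move: hop => [_ [cadd _]].
have : nbhd op (0 + 0) U by rewrite addr0.
by move=> /(cadd _ _ _ subX0 subX0).
Qed.

Lemma op_iff U : op U <-> (forall x, U x -> X x) /\ forall x, U x -> nbhd op x U.
Proof.
move: hop => [[sub [_ [uni _]]] _]; split.
- move=> oU; split; first exact: sub. by move=> x Ux; exists U.
- move=> [UX nU].
  pose I := {V : set M | op V /\ forall y, V y -> U y}.
  have := uni I (fun i => proj1_sig i) (fun i => proj1 (proj2_sig i)).
  have -> // : (fun x => exists i : I, proj1_sig i x) = U.
  apply: functional_extensionality => x; apply: propositional_extensionality; split.
  + by move=> [[V [oV VU]] /= Vx]; apply: VU.
  + move=> Ux; have [V [oV [Vx VU]]] := nU x Ux.
    by exists (exist _ V (conj oV VU)).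
Qed.

End GenTop.


Section BTop.
Variables (M : zmodType) (X : set M) (C : R) (B : R -> set M).
Hypothesis hX : subgroup X.
Hypothesis C0 : Rlt 0 C.
Hypothesis B0 : forall e, Rlt 0 e -> Rlt e C -> B e 0.
Hypothesis BN : forall e, Rlt 0 e -> Rlt e C -> forall x, B e x -> B e (- x).
Hypothesis BD : forall e e', Rlt 0 e -> Rlt 0 e' -> Rlt (Rplus e e') C ->
  forall x y, B e x -> B e' y -> B (Rplus e e') (x + y).
Hypothesis BX : forall e, Rlt 0 e -> Rlt e C -> forall x, B e x -> X x.

Lemma Bmono e e' x : Rlt 0 e -> Rle e e' -> Rlt e' C -> B e x -> B e' x.
Proof.
move=> e0 ee' e'C Bx; case: (Rle_lt_or_eq_dec _ _ ee') => [lt|<-] //.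
have -> : e' = Rplus e (Rminus e' e) by lra.
rewrite -(addr0 x); apply: BD => //; try lra.
apply: B0; lra.
Qed.

Definition opB (U : set M) := (forall x, U x -> X x) /\
  forall x, U x -> exists e, Rlt 0 e /\ Rlt e C /\ forall k, B e k -> U (x + k).

Lemma opB_top : is_topology_on X opB.
Proof using hX C0 B0 BN BD BX.
split; first by move=> U [].
split.
  split=> // x Xx; exists (Rdiv C 2); split; first lra; split; first lra.
  move=> k Bk; apply: subXD => //; apply: (BX (e := Rdiv C 2)) => //; lra.
split.
  move=> I F oF; split.
    by move=> x [i Fx]; case: (oF i) => sub _; exact: sub x Fx.
  move=> x [i Fx]; case: (oF i) => _ /(_ x Fx) [e [e0 [eC H]]].
  by exists e; split=> //; split=> // k /H Fk; exists i.
move=> U V [UX oU] [VX oV]; split; first by move=> x [/UX].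
move=> x [/oU [e [e0 [eC HU]]] /oV [e' [e'0 [e'C HV]]]].
exists (Rmin e e'); split; first by apply: Rmin_glb_lt.
split; first by apply: (Rle_lt_trans _ e); [apply: Rmin_l|].
move=> k Bk; split.
- apply: HU; apply: (Bmono (e := Rmin e e')) => //; [by apply: Rmin_glb_lt|apply: Rmin_l].
- apply: HV; apply: (Bmono (e := Rmin e e')) => //; [by apply: Rmin_glb_lt|apply: Rmin_r].
Qed.

Lemma opB_nbhd x U : X x -> (nbhd opB x U <->
  exists e, Rlt 0 e /\ Rlt e C /\ forall k, B e k -> U (x + k)).
Proof using hX C0 B0 BN BD BX.
move=> Xx; split.
- move=> [V [[_ oV] [Vx VU]]]; have [e [e0 [eC H]]] := oV x Vx.
  by exists e; split=> //; split=> // k /H /VU.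
- move=> [e [e0 [eC H]]].
  exists (fun y => X y /\ exists e, Rlt 0 e /\ Rlt e C /\ forall k, B e k -> U (y + k)).
  split; last first.
    split; first by split=> //; exists e.
    by move=> y [_ [e1 [p1 [p2 H1]]]]; rewrite -(addr0 y); apply: H1; apply: B0.
  split; first by move=> y [].
  move=> y [Xy [e1 [e10 [e1C H1]]]]; exists (Rdiv e1 2); split; first lra; split; first lra.
  move=> k Bk; split; first by apply: subXD => //; apply: (BX (e := Rdiv e1 2)) => //; lra.
  exists (Rdiv e1 2); split; first lra; split; first lra.
  move=> k' Bk'; rewrite -addrA; apply: H1.
  have -> : e1 = Rplus (Rdiv e1 2) (Rdiv e1 2) by lra.
  apply: BD => //; lra.
Qed.

Lemma opB_group : group_topology_on X opB.
Proof using hX C0 B0 BN BD BX.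
split; first exact: opB_top.
split.
- move=> x y U Xx Xy /(opB_nbhd _ (subXD hX Xx Xy)) [e [e0 [eC H]]].
  exists (fun a => exists k, B (Rdiv e 2) k /\ a = x + k).
  exists (fun a => exists k, B (Rdiv e 2) k /\ a = y + k).
  split.
    apply/(opB_nbhd _ Xx); exists (Rdiv e 2); split; first lra; split; first lra.
    by move=> k Bk; exists k.
  split.
    apply/(opB_nbhd _ Xy); exists (Rdiv e 2); split; first lra; split; first lra.
    by move=> k Bk; exists k.
  move=> a b [k [Bk ->]] [k' [Bk' ->]].
  have -> : x + k + (y + k') = x + y + (k + k') by rewrite addrACA.
  apply: H; have -> : e = Rplus (Rdiv e 2) (Rdiv e 2) by lra.
  apply: BD => //; lra.
- move=> x U Xx /(opB_nbhd _ (subXN hX Xx)) [e [e0 [eC H]]].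
  exists (fun a => exists k, B e k /\ a = x + k); split.
    apply/(opB_nbhd _ Xx); exists e; split=> //; split=> //.
    by move=> k Bk; exists k.
  move=> a [k [Bk ->]]; rewrite opprD; apply: H; exact: BN.
Qed.
End BTop.


Lemma nbhd_basis (M : zmodType) (X : set M) (op : set M -> Prop) (C : R) (B : R -> set M) :
  subgroup X -> group_topology_on X op ->
  (forall e, Rlt 0 e -> Rlt e C -> nbhd op 0 (B e)) ->
  (forall U, nbhd op 0 U -> exists e, Rlt 0 e /\ Rlt e C /\ forall k, B e k -> U k) ->
  forall x U, X x -> (nbhd op x U <->
     exists e, Rlt 0 e /\ Rlt e C /\ forall k, B e k -> U (x + k)).
Proof.
move=> hX hop hB1 hB2 x U Xx; split.
- by move=> /(nbhd_shift hX hop _ Xx) /hB2.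
- move=> [e [e0 [eC H]]]; apply/(nbhd_shift hX hop _ Xx).
  exact: (nbhd_sup (hB1 e e0 eC)).
Qed.

Lemma part1 (G : zmodType) (C : R) (P : R -> set G) (L : set G) :
  Rlt 0 C -> subgroup L ->
  (forall e, Rlt 0 e -> Rlt e C -> P e 0 /\ forall x, P e x <-> P e (- x)) ->
  (forall e e', Rlt 0 e -> Rlt 0 e' -> Rlt (Rplus e e') C ->
     forall x y, P e x -> P e' y -> P (Rplus e e') (x + y)) ->
  (forall e, Rlt 0 e -> Rlt e C -> forall x, P e x -> L x) ->
  ((exists opL, P_topology C P L opL) /\
   (forall opL opL', P_topology C P L opL -> P_topology C P L opL' ->
      forall U, opL U <-> opL' U)).
Proof.
move=> C0 hL A1 A3 A5.
have P0 : forall e, Rlt 0 e -> Rlt e C -> P e 0 by move=> e e0 eC; case: (A1 e e0 eC).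
have PN : forall e, Rlt 0 e -> Rlt e C -> forall x, P e x -> P e (- x).
  by move=> e e0 eC x; case: (A1 e e0 eC) => _ ->.
have key : forall op, P_topology C P L op -> forall U, op U <->
   ((forall x, U x -> L x) /\ forall x, U x ->
     exists e, Rlt 0 e /\ Rlt e C /\ forall k, P e k -> U (x + k)).
  move=> op [hop [h1 h2]] U; rewrite (op_iff hop); split.
  - move=> [UL nU]; split=> // x Ux.
    by apply/(nbhd_basis hL hop h1 h2 _ (UL x Ux)); apply: nU.
  - move=> [UL nU]; split=> // x Ux.
    by apply/(nbhd_basis hL hop h1 h2 _ (UL x Ux)); apply: nU.
split.
- exists (opB L C P); split; first exact: opB_group.
  split.
    move=> e e0 eC; apply/(opB_nbhd hL C0 P0 PN A3 A5 _ (subX0 hL)).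
    by exists e; split=> //; split=> // k; rewrite add0r.
  move=> U /(opB_nbhd hL C0 P0 PN A3 A5 _ (subX0 hL)) [e [e0 [eC H]]].
  by exists e; split=> //; split=> // k /H; rewrite add0r.
- move=> op op' h h' U; rewrite (key _ h) (key _ h'); done.
Qed.


Section Compl.
Variables (G : zmodType) (C : R) (P : R -> set G) (L : set G).
Hypothesis C0 : Rlt 0 C.
Hypothesis hL : subgroup L.
Hypothesis P0 : forall e, Rlt 0 e -> Rlt e C -> P e 0.
Hypothesis PN : forall e, Rlt 0 e -> Rlt e C -> forall x, P e x -> P e (- x).
Hypothesis A3 : forall e e', Rlt 0 e -> Rlt 0 e' -> Rlt (Rplus e e') C ->
     forall x y, P e x -> P e' y -> P (Rplus e e') (x + y).
Hypothesis A5 : forall e, Rlt 0 e -> Rlt e C -> forall x, P e x -> L x.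

Lemma Phalf e x y : Rlt 0 e -> Rlt e C -> P (Rdiv e 2) x -> P (Rdiv e 2) y -> P e (x + y).
Proof.
move=> e0 eC Px Py; have -> : e = Rplus (Rdiv e 2) (Rdiv e 2) by lra.
apply: A3 => //; lra.
Qed.

Lemma Pm e e' x : Rlt 0 e -> Rle e e' -> Rlt e' C -> P e x -> P e' x.
Proof. exact: (Bmono P0 A3). Qed.

Lemma PN' e x : Rlt 0 e -> Rlt e C -> P e (- x) -> P e x.
Proof. by move=> e0 eC /(PN e0 eC); rewrite opprK. Qed.

Definition cauchy (s : nat -> G) := (forall n, L (s n)) /\
  forall e, Rlt 0 e -> Rlt e C -> exists N, forall m n, (N <= m)%nat -> (N <= n)%nat ->
    P e (s m - s n).
Definition equiv (s t : nat -> G) :=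
  forall e, Rlt 0 e -> Rlt e C -> exists N, forall n, (N <= n)%nat -> P e (s n - t n).

Lemma equiv_pw s t : (forall n, s n = t n) -> equiv s t.
Proof. move=> st e e0 eC; exists 0%nat => n _; rewrite st subrr; exact: P0. Qed.

Lemma equiv_sym s t : equiv s t -> equiv t s.
Proof.
move=> st e e0 eC; have [N HN] := st e e0 eC; exists N => n /HN.
by move=> /(PN e0 eC); rewrite opprB.
Qed.

Lemma equiv_trans s t u : equiv s t -> equiv t u -> equiv s u.
Proof.
move=> st tu e e0 eC.
have [N1 H1] := st (Rdiv e 2) ltac:(lra) ltac:(lra).
have [N2 H2] := tu (Rdiv e 2) ltac:(lra) ltac:(lra).
exists (maxn N1 N2) => n Hn.
have -> : s n - u n = (s n - t n) + (t n - u n) by rewrite addrA subrK.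
by apply: Phalf => //; [apply: H1; exact: maxl Hn | apply: H2; exact: maxr Hn].
Qed.

Lemma equiv_add s s' t t' : equiv s s' -> equiv t t' ->
  equiv (fun n => s n + t n) (fun n => s' n + t' n).
Proof.
move=> ss tt e e0 eC.
have [N1 H1] := ss (Rdiv e 2) ltac:(lra) ltac:(lra).
have [N2 H2] := tt (Rdiv e 2) ltac:(lra) ltac:(lra).
exists (maxn N1 N2) => n Hn.
have -> : s n + t n - (s' n + t' n) = (s n - s' n) + (t n - t' n).
  by rewrite opprD addrACA.
by apply: Phalf => //; [apply: H1; exact: maxl Hn | apply: H2; exact: maxr Hn].
Qed.

Lemma equiv_opp s s' : equiv s s' -> equiv (fun n => - s n) (fun n => - s' n).
Proof.
move=> ss e e0 eC; have [N HN] := ss e e0 eC; exists N => n /HN Hn.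
by rewrite -opprD; apply: PN.
Qed.

Lemma cauchy_const x : L x -> cauchy (fun _ => x).
Proof.
move=> Lx; split=> // e e0 eC; exists 0%nat => m n _ _; rewrite subrr; exact: P0.
Qed.

Lemma cauchy_add s t : cauchy s -> cauchy t -> cauchy (fun n => s n + t n).
Proof.
move=> [Ls cs] [Lt ct]; split; first by move=> n; apply: subXD.
move=> e e0 eC.
have [N1 H1] := cs (Rdiv e 2) ltac:(lra) ltac:(lra).
have [N2 H2] := ct (Rdiv e 2) ltac:(lra) ltac:(lra).
exists (maxn N1 N2) => m n Hm Hn.
have -> : s m + t m - (s n + t n) = (s m - s n) + (t m - t n).
  by rewrite opprD addrACA.
apply: Phalf => //; [apply: H1|apply: H2];
  by [exact: maxl Hm|exact: maxl Hn|exact: maxr Hm|exact: maxr Hn].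
Qed.

Lemma cauchy_opp s : cauchy s -> cauchy (fun n => - s n).
Proof.
move=> [Ls cs]; split; first by move=> n; apply: subXN.
move=> e e0 eC; have [N HN] := cs e e0 eC; exists N => m n Hm Hn.
by rewrite -opprD; apply: PN => //; apply: HN.
Qed.

Definition cls (s : nat -> G) : set (nat -> G) := fun t => cauchy t /\ equiv s t.

Definition Hcar := {S : set (nat -> G) | exists s, cauchy s /\ S = cls s}.

Definition rep (S : Hcar) : nat -> G :=
  proj1_sig (constructive_indefinite_description _ (proj2_sig S)).

Lemma rep_spec S : cauchy (rep S) /\ proj1_sig S = cls (rep S).
Proof. rewrite /rep; case: constructive_indefinite_description => s /= []; done. Qed.

Lemma cauchy_rep S : cauchy (rep S). Proof. by case: (rep_spec S). Qed.

Definition mk (s : nat -> G) (hs : cauchy s) : Hcar :=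
  exist _ (cls s) (ex_intro _ s (conj hs erefl)).

Lemma cls_eq s t : equiv s t -> cls s = cls t.
Proof.
move=> st; apply: functional_extensionality => u; apply: propositional_extensionality.
split=> [[cu su]|[cu tu]]; split=> //.
- exact: equiv_trans (equiv_sym st) su.
- exact: equiv_trans st tu.
Qed.

Lemma mk_eq s t (hs : cauchy s) (ht : cauchy t) : equiv s t -> mk hs = mk ht.
Proof. by move=> st; apply: subset_eq_compat; apply: cls_eq. Qed.

Lemma mk_rep S : S = mk (cauchy_rep S).
Proof.
have [_ E] := rep_spec S; case: S E => V hV /= E.
by apply: subset_eq_compat.
Qed.

Lemma rep_mk s (hs : cauchy s) : equiv s (rep (@mk s hs)).
Proof.
have [cr e] := rep_spec (mk hs).
have : cls (rep (mk hs)) (rep (mk hs)) by split=> //; apply: equiv_pw.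
by rewrite -e /= => [[]].
Qed.

Lemma eq_mk s t (hs : cauchy s) (ht : cauchy t) : @mk s hs = @mk t ht -> equiv s t.
Proof.
move=> E; have := rep_mk hs; rewrite E => h; exact: equiv_trans h (equiv_sym (rep_mk ht)).
Qed.

Definition zeroH : Hcar := mk (cauchy_const (subX0 hL)).
Definition addH (S T : Hcar) : Hcar := mk (cauchy_add (cauchy_rep S) (cauchy_rep T)).
Definition oppH (S : Hcar) : Hcar := mk (cauchy_opp (cauchy_rep S)).

Lemma addHA : associative addH.
Proof.
move=> x y z; apply: mk_eq.
apply: (equiv_trans (equiv_add (equiv_pw (fun _ => erefl)) (equiv_sym (rep_mk _)))).
apply: (equiv_trans (equiv_pw (fun n => addrA _ _ _))).
exact: (equiv_add (rep_mk _) (equiv_pw (fun _ => erefl))).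
Qed.

Lemma addHC : commutative addH.
Proof. by move=> x y; apply: mk_eq; apply: equiv_pw => n; rewrite addrC. Qed.

Lemma add0H : left_id zeroH addH.
Proof.
move=> x; rewrite [RHS]mk_rep; apply: mk_eq.
apply: (equiv_trans (equiv_add (equiv_sym (rep_mk _)) (equiv_pw (fun _ => erefl)))).
by apply: equiv_pw => n; rewrite add0r.
Qed.

Lemma addNH : left_inverse zeroH oppH addH.
Proof.
move=> x; apply: mk_eq.
apply: (equiv_trans (equiv_add (equiv_sym (rep_mk _)) (equiv_pw (fun _ => erefl)))).
by apply: equiv_pw => n; rewrite addNr.
Qed.

HB.instance Definition _ := boolp.gen_eqMixin Hcar.
HB.instance Definition _ := boolp.gen_choiceMixin Hcar.
Definition HZ : zmodType := HB.pack Hcar (GRing.isZmodule.Build Hcar addHA addHC add0H addNH).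

Lemma HZ_add (x y : HZ) : x + y = addH x y. Proof. by []. Qed.
Lemma HZ_opp (x : HZ) : - x = oppH x. Proof. by []. Qed.
Lemma HZ_zero : (0 : HZ) = zeroH. Proof. by []. Qed.


Definition ev e (s : nat -> G) := exists N, forall n, (N <= n)%nat -> P e (s n).

Lemma ev_equiv e e' s t : Rlt 0 e' -> Rlt e' e -> Rlt e C -> equiv s t -> ev e' s -> ev e t.
Proof.
move=> e'0 e'e eC st [N1 H1].
have [N2 H2] := st (Rminus e e') ltac:(lra) ltac:(lra).
exists (maxn N1 N2) => n Hn.
have -> : t n = s n + - (s n - t n) by rewrite opprB addrC subrK.
have -> : e = Rplus e' (Rminus e e') by lra.
apply: A3; try lra; first by apply: H1; exact: maxl Hn.
apply: PN; try lra; apply: H2; exact: maxr Hn.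
Qed.

Lemma ev_mono e e' s : Rlt 0 e -> Rle e e' -> Rlt e' C -> ev e s -> ev e' s.
Proof. by move=> e0 ee e'C [N H]; exists N => n /H; apply: Pm. Qed.

Definition Bh e (S : HZ) := exists e', Rlt 0 e' /\ Rlt e' e /\ ev e' (rep S).

Lemma Bh_intro e e' (S : HZ) s : Rlt 0 e' -> Rlt e' e -> Rlt e C ->
  equiv s (rep S) -> ev e' s -> Bh e S.
Proof.
move=> e'0 e'e eC st evs; exists (Rdiv (Rplus e e') 2); split; first lra; split; first lra.
apply: ev_equiv st evs => //; lra.
Qed.

Lemma Bh_ev e S : Rlt e C -> Bh e S -> ev e (rep S).
Proof. move=> eC [e' [e'0 [e'e H]]]; apply: ev_mono H => //; lra. Qed.

Lemma Bh0 e : Rlt 0 e -> Rlt e C -> Bh e 0.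
Proof.
move=> e0 eC; apply: (@Bh_intro e (Rdiv e 2) _ (fun _ => 0)); try lra.
  exact: rep_mk.
exists 0%nat => n _; apply: P0; lra.
Qed.

Lemma BhN e : Rlt 0 e -> Rlt e C -> forall S, Bh e S -> Bh e (- S).
Proof.
move=> e0 eC S [e' [e'0 [e'e [N H]]]].
apply: (@Bh_intro e e' _ (fun n => - rep S n)) => //; first exact: rep_mk.
by exists N => n /H; apply: PN; lra.
Qed.

Lemma BhD e e' : Rlt 0 e -> Rlt 0 e' -> Rlt (Rplus e e') C ->
  forall S T, Bh e S -> Bh e' T -> Bh (Rplus e e') (S + T).
Proof.
move=> e0 e'0 eC S T [e1 [e10 [e1e [N1 H1]]]] [e2 [e20 [e2e [N2 H2]]]].
apply: (@Bh_intro _ (Rplus e1 e2) _ (fun n => rep S n + rep T n)); try lra.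
  exact: rep_mk.
exists (maxn N1 N2) => n Hn; apply: A3; try lra.
  by apply: H1; exact: maxl Hn.
by apply: H2; exact: maxr Hn.
Qed.

Lemma BhX e : Rlt 0 e -> Rlt e C -> forall (x : HZ), Bh e x -> (fun _ => True) x.
Proof. by []. Qed.

Lemma subT : subgroup (fun _ : HZ => True). Proof. by []. Qed.

Definition opH := opB (fun _ : HZ => True) C Bh.

Lemma opH_group : group_topology opH.
Proof. exact: (opB_group subT C0 Bh0 BhN BhD BhX). Qed.

Lemma opH_nbhd (x : HZ) U : nbhd opH x U <->
  exists e, Rlt 0 e /\ Rlt e C /\ forall k, Bh e k -> U (x + k).
Proof. exact: (opB_nbhd subT C0 Bh0 BhN BhD BhX). Qed.

Lemma Bh_all (S : HZ) : (forall e, Rlt 0 e -> Rlt e C -> Bh e S) -> S = 0.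
Proof.
move=> H; rewrite (mk_rep S) HZ_zero; apply: mk_eq => e e0 eC.
have [N HN] := Bh_ev eC (H e e0 eC); exists N => n /HN; by rewrite subr0.
Qed.

Lemma opH_hausdorff : hausdorff opH.
Proof.
move=> x y xy.
have [e [e0 [eC nB]]] : exists e, Rlt 0 e /\ Rlt e C /\ ~ Bh e (x - y).
  apply: NNPP => H; apply: xy; apply/eqP; rewrite -subr_eq0; apply/eqP.
  apply: Bh_all => e e0 eC; apply: NNPP => nB; apply: H; exists e; done.
exists (fun z => exists k, Bh (Rdiv e 2) k /\ z = x + k).
exists (fun z => exists k, Bh (Rdiv e 2) k /\ z = y + k).
split; first by apply/opH_nbhd; exists (Rdiv e 2); do 2 (split; first lra); move=> k Bk; exists k.
split; first by apply/opH_nbhd; exists (Rdiv e 2); do 2 (split; first lra); move=> k Bk; exists k.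
move=> z [k [Bk ->]] [k' [Bk' E]]; apply: nB.
have -> : x - y = k' + - k.
  have E' : x = y + k' - k by rewrite -E addrK.
  by rewrite E' addrAC [y + k']addrC addrK.
have -> : e = Rplus (Rdiv e 2) (Rdiv e 2) by lra.
apply: BhD; try lra; by [| apply: BhN; try lra].
Qed.


Definition phi (x : G) : HZ :=
  match excluded_middle_informative (L x) with
  | left h => mk (cauchy_const h)
  | right _ => 0
  end.

Lemma phi_L x (h : L x) : phi x = mk (cauchy_const h).
Proof.
rewrite /phi; case: excluded_middle_informative => [h'|//].
by apply: mk_eq; exact: equiv_pw.
Qed.

Lemma rep_phi x : L x -> equiv (fun _ => x) (rep (phi x)).
Proof. by move=> h; rewrite (phi_L h); exact: rep_mk. Qed.

Lemma phi_add x y : L x -> L y -> phi (x + y) = phi x + phi y.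
Proof.
move=> hx hy; rewrite (phi_L (subXD hL hx hy)) (phi_L hx) (phi_L hy) HZ_add.
by apply: mk_eq; exact: (equiv_add (rep_mk _) (rep_mk _)).
Qed.

Lemma rep_sub (a b : HZ) : equiv (fun n => rep a n - rep b n) (rep (a - b)).
Proof.
rewrite HZ_add HZ_opp.
apply: (equiv_trans (t := fun n => rep a n + rep (oppH b) n)).
  apply: equiv_add; first exact: equiv_pw.
  exact: (rep_mk (cauchy_opp (cauchy_rep b))).
exact: (rep_mk (cauchy_add (cauchy_rep a) (cauchy_rep (oppH b)))).
Qed.

Lemma approx (S : HZ) e : Rlt 0 e -> Rlt e C -> exists x, L x /\ Bh e (phi x - S).
Proof.
move=> e0 eC; have [Ls cs] := cauchy_rep S.
have [N HN] := cs (Rdiv e 2) ltac:(lra) ltac:(lra).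
exists (rep S N); split=> //.
apply: (@Bh_intro e (Rdiv e 2) _ (fun n => rep S N - rep S n)); try lra.
  apply: equiv_trans (rep_sub _ _).
  exact: (equiv_add (rep_phi (Ls N)) (equiv_pw (fun _ => erefl))).
by exists N => n Hn; apply: HN.
Qed.

Lemma phi_small e e' x : Rlt 0 e' -> Rlt e' e -> Rlt e C -> P e' x -> Bh e (phi x).
Proof.
move=> e'0 e'e eC Px; apply: (@Bh_intro e e' _ (fun _ => x)) => //.
  by apply: rep_phi; apply: (A5 (e := e')) => //; lra.
by exists 0%nat.
Qed.

Lemma Bh_phi e x : L x -> Rlt 0 e -> Rlt e C -> Bh e (phi x) -> P e x.
Proof.
move=> Lx e0 eC [e1 [e10 [e1e H]]].
have [N HN] := ev_equiv e10 e1e eC (equiv_sym (rep_phi Lx)) H.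
exact: (HN N).
Qed.

Lemma Bh_mono e e' S : Rle e e' -> Bh e S -> Bh e' S.
Proof. move=> ee [e1 [? [? ?]]]; exists e1; split=> //; split=> //; lra. Qed.

Lemma opH_dense : dense opH (fun h => exists t, L t /\ h = phi t).
Proof.
move=> U [_ oU] [S US]; have [e [e0 [eC H]]] := oU S US.
have [x [Lx B]] := approx S e0 eC.
exists (phi x); split; last by exists x.
by have := H _ B; rewrite addrC subrK.
Qed.

Lemma opH_unif1 V : nbhd opH 0 V ->
  exists e, Rlt 0 e /\ Rlt e C /\ forall x, P e x -> V (phi x).
Proof.
move=> /opH_nbhd [e [e0 [eC H]]]; exists (Rdiv e 2); split; first lra; split; first lra.
move=> x Px; rewrite -(add0r (phi x)); apply: H.
apply: (@phi_small e (Rdiv e 2)) => //; lra.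
Qed.

Lemma opH_unif2 e : Rlt 0 e -> Rlt e C ->
  exists V, nbhd opH 0 V /\ forall x, L x -> V (phi x) -> P e x.
Proof.
move=> e0 eC; exists (Bh e); split; last by move=> x Lx; apply: Bh_phi.
apply/opH_nbhd; exists e; split=> //; split=> // k; rewrite add0r; done.
Qed.


Lemma phi_sub x y : L x -> L y -> phi (x - y) = phi x - phi y.
Proof.
move=> Lx Ly; have Lxy : L (x - y) by case: hL => _; apply.
have := phi_add Lxy Ly; rewrite subrK => ->; by rewrite addrK.
Qed.

Lemma three_split (p q a b : HZ) : p - q = (p - a) + ((a - b) + - (q - b)).
Proof. by rewrite opprB !addrA subrK subrK. Qed.

Lemma opH_complete : complete_group opH.
Proof.
move=> F [FT [Fsup [Fcap Fnot]]] Fc.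
pose d := dd C.
have dpos n : Rlt 0 (d n) by apply: dd_pos.
have dle n : Rle (d n) (Rdiv C 8) by apply: dd_le.
have dmono n m : (n <= m)%nat -> Rle (d m) (d n) by apply: dd_mono.
have hA : forall n, exists A, F A /\ forall a b, A a -> A b -> Bh (d n) (a - b).
  move=> n; apply: Fc; apply/opH_nbhd; exists (d n); split=> //.
  split; first by have := dle n; lra.
  by move=> k; rewrite add0r.
pose A n := proj1_sig (constructive_indefinite_description _ (hA n)).
have FA n : F (A n) by rewrite /A; case: constructive_indefinite_description => ? [].
have HA n : forall a b, A n a -> A n b -> Bh (d n) (a - b).
  by rewrite /A; case: constructive_indefinite_description => ? [].
pose D n := fun y => forall k, (k <= n)%nat -> A k y.
have FD n : F (D n).
  elim: n => [|n IH].
    by apply: (Fsup _ _ (FA 0%nat)) => y Ay k; rewrite leqn0 => /eqP ->.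
  apply: (Fsup _ _ (Fcap _ _ IH (FA n.+1))) => y [Dy Ay] k.
  by rewrite leq_eqVlt => /orP [/eqP ->|]; [done| rewrite ltnS; exact: Dy].
have Dne n : exists y, D n y.
  by apply: NNPP => H; apply: Fnot; apply: (Fsup _ _ (FD n)) => y Dy; apply: H; exists y.
pose a n := epsilon (inhabits (0 : HZ)) (D n).
have aD n : D n (a n) by apply: epsilon_spec; apply: Dne.
have ht n : exists t, L t /\ Bh (d n) (phi t - a n).
  by apply: approx => //; have := dle n; lra.
pose t n := proj1_sig (constructive_indefinite_description _ (ht n)).
have Lt n : L (t n) by rewrite /t; case: constructive_indefinite_description => ? [].
have Bt n : Bh (d n) (phi (t n) - a n).
  by rewrite /t; case: constructive_indefinite_description => ? [].
have Q n m : (n <= m)%nat -> P (Rmult 3 (d n)) (t m - t n).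
  move=> nm; apply: Bh_phi; first by case: hL => _; apply.
    by have := dpos n; lra.
    by have := dle n; lra.
  rewrite phi_sub // (three_split _ _ (a m) (a n)).
  apply: (@Bh_mono (Rplus (d m) (Rplus (d n) (d n)))).
    by have := dmono _ _ nm; lra.
  apply: BhD => //; try (have := dle n; have := dle m; have := dpos n; lra).
    apply: BhD => //; try (have := dle n; lra).
    by apply: HA; [apply: aD|apply: aD].
  by apply: BhN => //; have := dle n; lra.
have ct : cauchy t.
  split=> // e e0 eC; have [n Hn] := dd_small C e C0 e0.
  exists n => m m' Hm Hm'.
  have -> : t m - t m' = (t m - t n) + - (t m' - t n) by rewrite opprB addrA subrK.
  apply: (@Pm (Rplus (Rmult 3 (d n)) (Rmult 3 (d n)))) => //.
    by have := dpos n; lra.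
    by rewrite /d; lra.
  apply: A3; try (have := dle n; have := dpos n; lra).
    exact: Q.
  by apply: PN; [have := dpos n; lra|have := dle n; lra|exact: Q].
pose x : HZ := mk ct.
exists x => U /opH_nbhd [e [e0 [eC H]]].
have [n Hn] := dd_small C e C0 e0.
apply: (Fsup _ _ (FD n)) => y Dy.
have -> : y = x + (y - x) by rewrite addrC subrK.
apply: H; apply: (@Bh_mono (Rplus (d n) (Rplus (d n) (Rmult 4 (d n))))).
  by rewrite /d; lra.
rewrite (three_split _ _ (a n) (phi (t n))).
have dn0 := dpos n; have dnC := dle n.
apply: BhD; try lra.
  by apply: HA; [apply: Dy|apply: aD].
apply: BhD; try lra.
  by rewrite -opprB; apply: BhN; try lra.
rewrite opprB.
apply: (@Bh_intro _ (Rmult 3 (d n)) _ (fun m => t n - t m)); try lra.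
  apply: equiv_trans (rep_sub _ _).
  exact: (equiv_add (rep_phi (Lt n)) (equiv_opp (rep_mk ct))).
by exists n => m Hm; apply: PN'; try lra; rewrite opprB; apply: Q.
Qed.


Lemma completion_exists : exists (H : zmodType) (opH' : set H -> Prop) (phi' : G -> H),
  is_completion C P L opH' phi'.
Proof.
exists HZ, opH, phi; split; first exact: opH_group.
split; first exact: opH_hausdorff.
split; first exact: opH_complete.
split; first exact: phi_add.
split; first exact: opH_dense.
split; first exact: opH_unif1.
exact: opH_unif2.
Qed.

End Compl.


Lemma finter (A : Type) (op : set A -> Prop) (J : Type) (f : J -> set A) a (l : list J) :
  is_topology op -> (forall j, op (f j)) -> (forall j, f j a) ->
  exists O, op O /\ O a /\ forall x, O x -> forall j, List.In j l -> f j x.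
Proof.
move=> [_ [oT [_ capo]]] hf fa; elim: l => [|j l [O [oO [Oa HO]]]].
  by exists (fun _ => True); split=> //; split=> // x _ j [].
exists (fun x => O x /\ f j x); split; first exact: capo (hf j).
split=> // x [Ox fx] j' [<-|Hj] //; exact: HO.
Qed.

Lemma prod_compact (A B : Type) (opA : set A -> Prop) (opB : set B -> Prop)
  (KA : set A) (KB : set B) :
  is_topology opA -> Defs.compact opA KA -> Defs.compact opB KB ->
  Defs.compact (prod_top opA opB) (fun q => KA q.1 /\ KB q.2).
Proof.
move=> tA cKA cKB I F oF cov.
pose fc (S : set (A * B)) := exists s : list I, forall q, S q -> exists i, List.In i s /\ F i q.
have step1 : forall a, KA a -> exists N, opA N /\ N a /\ fc (fun q => N q.1 /\ KB q.2).
  move=> a KAa.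
  pose J := {j : I * set A * set B | opA j.1.2 /\ opB j.2 /\ j.1.2 a /\
     forall x y, j.1.2 x -> j.2 y -> F j.1.1 (x, y)}.
  have covJ : forall b, KB b -> exists j : J, (proj1_sig j).2 b.
    move=> b KBb; have [i Fi] := cov (a, b) (conj KAa KBb).
    have [U [V [oU [oV [Ua [Vb box]]]]]] := oF i (a, b) Fi.
    by exists (exist _ (i, U, V) (conj oU (conj oV (conj Ua box)))).
  have [js Hjs] := cKB J (fun j => (proj1_sig j).2)
    (fun j => proj1 (proj2 (proj2_sig j))) covJ.
  have [O [oO [Oa HO]]] := @finter A opA J (fun j : J => (proj1_sig j).1.2) a js tA
      (fun j => proj1 (proj2_sig j)) (fun j => proj1 (proj2 (proj2 (proj2_sig j)))).
  exists O; split=> //; split=> //.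
  exists (List.map (fun j : J => (proj1_sig j).1.1) js) => [[x y]] /= [Ox KBy].
  have [j [Hj Vy]] := Hjs y KBy.
  exists (proj1_sig j).1.1; split; first exact: List.in_map.
  exact: (proj2 (proj2 (proj2 (proj2_sig j))) x y (HO x Ox j Hj) Vy).
pose J2 := {N : set A | opA N /\ fc (fun q => N q.1 /\ KB q.2)}.
have cov2 : forall a, KA a -> exists n : J2, proj1_sig n a.
  move=> a KAa; have [N [oN [Na fN]]] := step1 a KAa.
  by exists (exist _ N (conj oN fN)).
have [ns Hns] := cKA J2 (fun n => proj1_sig n) (fun n => proj1 (proj2_sig n)) cov2.
  have un : forall l : list J2, fc (fun q => exists n, List.In n l /\ proj1_sig n q.1 /\ KB q.2).
    elim=> [|n l [s2 H2]].
      by exists nil => q [n [[] _]].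
    case: n => N [oN [s1 H1]].
    exists (s1 ++ s2) => q [n' [[<-|Hn] Hq]].
      have [i [Hi Fi]] := H1 q Hq; exists i; split=> //; by apply: List.in_or_app; left.
    have [i [Hi Fi]] := H2 q (ex_intro _ n' (conj Hn Hq)).
    by exists i; split=> //; apply: List.in_or_app; right.
  have [s Hs] := un ns; exists s => q [KAq KBq]; apply: Hs.
  have [n [Hn Nq]] := Hns q.1 KAq; by exists n.
Qed.

Lemma subTT (M : zmodType) : subgroup (fun _ : M => True). Proof. by []. Qed.

Lemma open_shift (M : zmodType) (op : set M -> Prop) (U : set M) c :
  group_topology op -> op U -> op (fun y => U (y + c)).
Proof.
move=> hop oU; apply/(op_iff hop); split=> // y Uy.
have : nbhd op (y + c) U by exists U.
move=> /(nbhd_shift (subTT M) hop _ I) nU.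
apply/(nbhd_shift (subTT M) hop _ I); apply: (nbhd_sup nU) => k.
by rewrite addrAC.
Qed.


Lemma compact_shift (M : zmodType) (op : set M -> Prop) (K : set M) c :
  group_topology op -> Defs.compact op K -> Defs.compact op (fun y => K (y - c)).
Proof.
move=> hop cK I F oF cov.
have cov' : forall y, K y -> exists i, (fun i y => F i (y + c)) i y.
  by move=> y Ky; apply: cov; rewrite addrK.
have [s Hs] := cK I (fun i y => F i (y + c)) (fun i => open_shift c hop (oF i)) cov'.
exists s => y Ky; have [i [Hi Fi]] := Hs (y - c) Ky; exists i; split=> //.
by rewrite subrK in Fi.
Qed.


Lemma open_nbhd_sub (M : Type) (op : set M -> Prop) x U :
  nbhd op x U -> exists O, op O /\ O x /\ forall y, O y -> U y.
Proof. by []. Qed.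

Section P3.
Variables (G : zmodType) (opG : set G -> Prop) (C : R) (P : R -> set G) (L : set G).
Hypothesis hG : LCA_group opG.
Hypothesis C0 : Rlt 0 C.
Hypothesis hL : subgroup L.
Hypothesis P0 : forall e, Rlt 0 e -> Rlt e C -> P e 0.
Hypothesis PN : forall e, Rlt 0 e -> Rlt e C -> forall x, P e x -> P e (- x).
Hypothesis A3 : forall e e', Rlt 0 e -> Rlt 0 e' -> Rlt (Rplus e e') C ->
     forall x y, P e x -> P e' y -> P (Rplus e e') (x + y).
Hypothesis A5 : forall e, Rlt 0 e -> Rlt e C -> forall x, P e x -> L x.
Hypothesis A2 : forall e, Rlt 0 e -> Rlt e C -> locally_finite opG (P e).
Hypothesis A4 : forall e, Rlt 0 e -> Rlt e C -> relatively_dense opG (P e).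
Variables (H : zmodType) (opH : set H -> Prop) (phi : G -> H).
Hypothesis hc : is_completion C P L opH phi.

Lemma hH : group_topology opH. Proof. by case: hc. Qed.
Lemma phiD x y : L x -> L y -> phi (x + y) = phi x + phi y.
Proof. by case: hc => _ [_ [_ [h _]]]; apply: h. Qed.
Lemma phi_dense : dense opH (fun h => exists t, L t /\ h = phi t).
Proof. by case: hc => _ [_ [_ [_ [h _]]]]. Qed.
Lemma unif1 V : nbhd opH 0 V -> exists e, Rlt 0 e /\ Rlt e C /\ forall x, P e x -> V (phi x).
Proof. by case: hc => _ [_ [_ [_ [_ [h _]]]]]; apply: h. Qed.
Lemma unif2 e : Rlt 0 e -> Rlt e C -> exists V, nbhd opH 0 V /\ forall x, L x -> V (phi x) -> P e x.
Proof. by case: hc => _ [_ [_ [_ [_ [_ h]]]]]; apply: h. Qed.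
Lemma Hcomplete : complete_group opH. Proof. by case: hc => _ [_ [h _]]. Qed.
Lemma Hhaus : hausdorff opH. Proof. by case: hc => _ [h _]. Qed.

Lemma phi0 : phi 0 = 0.
Proof.
have E := phiD (subX0 hL) (subX0 hL); rewrite addr0 in E.
by apply: (@addrI _ (phi 0)); rewrite addr0 -E.
Qed.
Lemma phiN x : L x -> phi (- x) = - phi x.
Proof.
move=> Lx; have := phiD Lx (subXN hL Lx); rewrite subrr phi0 => /eqP.
by rewrite eq_sym addrC addr_eq0 => /eqP.
Qed.
Lemma phiB x y : L x -> L y -> phi (x - y) = phi x - phi y.
Proof. by move=> Lx Ly; rewrite phiD ?phiN //; apply: subXN. Qed.

Definition W e : set H := fun h => forall U, opH U -> U h -> exists t, P e t /\ U (phi t).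

Lemma W_nbhd e : Rlt 0 e -> Rlt e C -> nbhd opH 0 (W e).
Proof.
move=> e0 eC; have [V [[O [oO [O0 OV]]] HV]] := unif2 e0 eC.
exists O; split=> //; split=> // h Oh U oU Uh.
move: hH => [[_ [_ [_ capo]]] _].
have [y [[Uy Oy] [t [Lt Ey]]]] := phi_dense (capo _ _ oU oO) (ex_intro _ h (conj Uh Oh)).
subst y; by exists t; split=> //; apply: HV => //; apply: OV.
Qed.

Lemma W_basis U : nbhd opH 0 U -> exists e, Rlt 0 e /\ Rlt e C /\ forall k, W e k -> U k.
Proof.
move=> /(nbhd_add0 (subTT H) hH) [V [V' [nV [nV' VV]]]].
have [e [e0 [eC Pe]]] := unif1 nV.
exists e; split=> //; split=> // h Wh.
have nN : nbhd opH h (fun y => V' (h - y)).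
  apply/(nbhd_shift (subTT H) hH _ I).
  apply: (nbhd_sup (nbhd_neg0 (subTT H) hH nV')) => k.
  by rewrite opprD addNKr.
have [O [oO [Oh ON]]] := nN.
have [t [Pt Ot]] := Wh O oO Oh.
have := VV _ _ (Pe t Pt) (ON _ Ot); by rewrite addrC subrK.
Qed.

Lemma W0 e : Rlt 0 e -> Rlt e C -> W e 0.
Proof. by move=> e0 eC; apply: nbhd_pt; apply: W_nbhd. Qed.

Lemma WN e : Rlt 0 e -> Rlt e C -> forall h, W e h -> W e (- h).
Proof.
move=> e0 eC h Wh U oU Uh.
move: hH => [_ [_ cneg]].
have : nbhd opH (- h) U by exists U.
move=> /(cneg _ _ I) [V [[O [oO [Oh OV]]] VU]].
have [t [Pt Ot]] := Wh O oO Oh.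
exists (- t); split; first exact: PN.
rewrite phiN; last exact: (A5 e0 eC Pt).
exact: VU (OV _ Ot).
Qed.

Lemma WD e e' : Rlt 0 e -> Rlt 0 e' -> Rlt (Rplus e e') C ->
  forall h h', W e h -> W e' h' -> W (Rplus e e') (h + h').
Proof.
move=> e0 e'0 eC h h' Wh Wh' U oU Uh.
move: hH => [_ [cadd _]].
have : nbhd opH (h + h') U by exists U.
move=> /(cadd _ _ _ I I) [V [V' [[O [oO [Oh OV]]] [[O' [oO' [Oh' OV']]] VV]]]].
have [t [Pt Ot]] := Wh O oO Oh.
have [t' [Pt' Ot']] := Wh' O' oO' Oh'.
exists (t + t'); split; first exact: A3.
rewrite phiD; [exact: VV (OV _ Ot) (OV' _ Ot')|apply: (A5 (e := e))|apply: (A5 (e := e'))]; by try lra.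
Qed.

Lemma WX e : Rlt 0 e -> Rlt e C -> forall h, W e h -> (fun _ : H => True) h.
Proof. by []. Qed.

Lemma Wmono e e' h : Rlt 0 e -> Rle e e' -> Rlt e' C -> W e h -> W e' h.
Proof. exact: (Bmono W0 WD). Qed.

Lemma Hnbhd x U : nbhd opH x U <-> exists e, Rlt 0 e /\ Rlt e C /\ forall k, W e k -> U (x + k).
Proof. exact: (nbhd_basis (subTT H) hH W_nbhd W_basis). Qed.

Lemma W_phi e t : P e t -> W e (phi t).
Proof. by move=> Pt U oU Ut; exists t. Qed.

Lemma approx_in e h : W e h -> forall d, Rlt 0 d -> Rlt d C ->
  exists t, P e t /\ W d (h - phi t).
Proof.
move=> Wh d d0 dC.
have nN : nbhd opH h (fun y => W d (h - y)).
  apply/Hnbhd; exists d; split=> //; split=> // k Wk.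
  by rewrite opprD addNKr; apply: WN.
have [O [oO [Oh ON]]] := nN.
have [t [Pt Ot]] := Wh O oO Oh.
by exists t; split=> //; apply: ON.
Qed.

Lemma W_closed e x : Rlt 0 e -> Rlt e C ->
  (forall d, Rlt 0 d -> Rlt d C -> exists y, W e y /\ W d (x - y)) -> W e x.
Proof.
move=> e0 eC Hx U oU Ux.
have [d [d0 [dC Hd]]] : exists d, Rlt 0 d /\ Rlt d C /\ forall k, W d k -> U (x + k).
  by apply/Hnbhd; exists U.
have [y [Wy Wxy]] := Hx (Rdiv d 2) ltac:(lra) ltac:(lra).
have [t [Pt Wt]] := approx_in Wy (d := Rdiv d 2) ltac:(lra) ltac:(lra).
exists t; split=> //.
have -> : phi t = x + - ((x - y) + (y - phi t)) by rewrite addrA subrK opprB addrC subrK.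
apply: Hd; apply: WN => //.
have -> : d = Rplus (Rdiv d 2) (Rdiv d 2) by lra.
by apply: WD => //; lra.
Qed.


Definition e0 := Rdiv C 4.

Lemma tb d : Rlt 0 d -> Rlt d C ->
  exists s : list H, forall h, W e0 h -> exists a, List.In a s /\ W d (h - a).
Proof.
move=> d0 dC; rewrite /e0.
have [KG [cK KGc]] := A4 (e := Rdiv d 2) ltac:(lra) ltac:(lra).
have [sG HsG] := A2 (e := Rplus (Rdiv C 4) (Rdiv d 2)) ltac:(lra) ltac:(lra) cK.
exists (List.map phi sG) => h Wh.
have [t [Pt Wt]] := approx_in Wh (d := Rdiv d 2) ltac:(lra) ltac:(lra).
have [a [k [Pa [Kk Et]]]] := KGc t.
have Ek : k = t + - a by rewrite Et addrC addKr.
have Pk : P (Rplus (Rdiv C 4) (Rdiv d 2)) k.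
  rewrite Ek; apply: A3; try lra; first done.
  by apply: PN; try lra.
exists (phi k); split; first by apply: List.in_map; apply: HsG.
have La : L a by apply: (A5 (e := Rdiv d 2)); try lra.
have Lk : L k by apply: (A5 (e := Rplus (Rdiv C 4) (Rdiv d 2))); try lra.
have -> : h - phi k = (h - phi t) + phi a.
  by rewrite Et phiD // opprD addrA addrAC subrK.
have -> : d = Rplus (Rdiv d 2) (Rdiv d 2) by lra.
by apply: WD; try lra; last by apply: W_phi.
Qed.

Definition fincov (I : Type) (F : I -> set H) (S : set H) :=
  exists s : list I, forall x, S x -> exists i, List.In i s /\ F i x.

Lemma fincov_union (I : Type) (F : I -> set H) (piece : H -> set H) (l : list H) :
  (forall a, List.In a l -> fincov F (piece a)) ->
  fincov F (fun y => exists a, List.In a l /\ piece a y).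
Proof.
elim: l => [|a l IH] Hl.
  by exists nil => x [a [[] _]].
have [s1 H1] := Hl a (or_introl erefl).
have [s2 H2] := IH (fun b Hb => Hl b (or_intror Hb)).
exists (s1 ++ s2) => x [b [[<-|Hb] Px]].
  have [i [Hi Fi]] := H1 x Px; exists i; split=> //; by apply: List.in_or_app; left.
have [i [Hi Fi]] := H2 x (ex_intro _ b (conj Hb Px)).
by exists i; split=> //; apply: List.in_or_app; right.
Qed.

Lemma W_compact : Defs.compact opH (W e0).
Proof.
move=> I F oF cov; apply: NNPP => nfc.
pose δ n := dd C n.
have dpos n : Rlt 0 (δ n) by apply: dd_pos.
have dle n : Rle (δ n) (Rdiv C 8) by apply: dd_le.
have dmono n m : (n <= m)%nat -> Rle (δ m) (δ n) by apply: dd_mono.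
have dC n : Rlt (δ n) C by have := dle n; lra.
have htb n := tb (dpos n) (dC n).
pose S n := proj1_sig (constructive_indefinite_description _ (htb n)).
have HS n : forall h, W e0 h -> exists a, List.In a (S n) /\ W (δ n) (h - a).
  by rewrite /S; case: constructive_indefinite_description.
pose ch (X : set H) n := epsilon (inhabits (0 : H))
  (fun c => List.In c (S n) /\ ~ fincov F (fun y => X y /\ W (δ n) (y - c))).
pose Q := fix Q n := match n with
  | 0%nat => W e0
  | m.+1 => fun y => Q m y /\ W (δ m.+1) (y - ch (Q m) m.+1) end.
have Qsub n y : Q n y -> W e0 y.
  by elim: n y => [|n IH] y //= [/IH].
have QS n y : Q n.+1 y -> Q n y by move=> [].
have Qdec n m y : (n <= m)%nat -> Q m y -> Q n y.
  move=> nm; elim: m nm y => [|m IH]; first by rewrite leqn0 => /eqP ->.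
  rewrite leq_eqVlt => /orP [/eqP -> //|]; rewrite ltnS => nm y /QS; exact: IH.
have Qnfc n : ~ fincov F (Q n).
  elim: n => [//|n IH].
  have ex : exists c, List.In c (S n.+1) /\
      ~ fincov F (fun y => Q n y /\ W (δ n.+1) (y - c)).
    apply: NNPP => nex; apply: IH.
    have : fincov F (fun y => exists a, List.In a (S n.+1) /\
                                   (fun y => Q n y /\ W (δ n.+1) (y - a)) y).
      apply: fincov_union => a Ha; apply: NNPP => nf; apply: nex; by exists a.
    move=> [s Hs]; exists s => y Qy; apply: Hs.
    have [a [Ha Wa]] := HS n.+1 y (Qsub _ _ Qy).
    by exists a.
  have := epsilon_spec (inhabits (0 : H)) _ ex; rewrite -/(ch (Q n) n.+1).
  by move=> [_ nf].
have Qne n : exists y, Q n y.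
  apply: NNPP => ne; apply: (Qnfc n); exists nil => y Qy; exfalso; apply: ne; by exists y.
have Qdiam n y z : Q n.+1 y -> Q n.+1 z -> W (Rplus (δ n.+1) (δ n.+1)) (y - z).
  move=> [_ Wy] [_ Wz].
  have -> : y - z = (y - ch (Q n) n.+1) + - (z - ch (Q n) n.+1).
    by rewrite opprB addrA subrK.
  by apply: WD; try (have := dpos n.+1; have := dle n.+1; lra); last by apply: WN.
pose k n := epsilon (inhabits (0 : H)) (Q n).
have kQ n : Q n (k n) by apply: epsilon_spec; apply: Qne.
pose Fk := fun A : set H => exists N, forall m, (N <= m)%nat -> A (k m).
have pF : proper_filter Fk.
  split; first by exists 0%nat.
  split; first by move=> A B [N HN] AB; exists N => m /HN /AB.
  split; first by move=> A B [N1 H1] [N2 H2]; exists (maxn N1 N2) => m Hm;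
    split; [apply: H1; exact: maxl Hm| apply: H2; exact: maxr Hm].
  by move=> [N HN]; apply: (HN N).
have cF : cauchy_filter opH Fk.
  move=> U /W_basis [e [e0' [eC HU]]].
  have [n Hn] := dd_small C e C0 e0'.
  exists (Q n.+1); split; first by exists n.+1 => m Hm; apply: (Qdec _ _ _ Hm).
  move=> a b Qa Qb; apply: HU; apply: (@Wmono (Rplus (δ n.+1) (δ n.+1))) => //.
  - by have := dpos n.+1; lra.
  - by have := dmono _ _ (leqnSn n); rewrite /δ; lra.
  - exact: Qdiam.
have [x conv] := Hcomplete pF cF.
have Wx : W e0 x.
  apply: W_closed; try (rewrite /e0; lra).
  move=> d d0 dC'.
  have [N HN] : Fk (fun y => W d (x - y)).
    apply: conv; apply/Hnbhd; exists d; split=> //; split=> // j Wj.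
    by rewrite opprD addNKr; apply: WN.
  by exists (k N); split; [apply: (Qsub N); apply: kQ|apply: HN].
have [i Fix] := cov x Wx.
have [e [e0' [eC He]]] : exists e, Rlt 0 e /\ Rlt e C /\ forall j, W e j -> F i (x + j).
  by apply/Hnbhd; exists (F i).
have [n Hn] := dd_small C e C0 e0'.
have [N HN] : Fk (fun y => W (δ n) (y - x)).
  apply: conv; apply/Hnbhd; exists (δ n); split=> //; split=> // j Wj.
  by rewrite addrC addKr.
apply: (Qnfc n.+1); exists (i :: nil) => y Qy; exists i; split; first by left.
have -> : y = x + ((y - k (maxn N n.+1)) + (k (maxn N n.+1) - x)).
  by rewrite (addrA (y - _)) subrK [x + _]addrC subrK.
apply: He; apply: (@Wmono (Rplus (Rplus (δ n.+1) (δ n.+1)) (δ n))).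
- by have := dpos n.+1; have := dpos n; lra.
- by have := dmono _ _ (leqnSn n); rewrite /δ; lra.
- done.
apply: WD; try (have := dpos n.+1; have := dpos n; have := dle n.+1; have := dle n; lra).
  apply: Qdiam => //; apply: (Qdec _ _ _ (maxr (leqnn _))); apply: kQ.
apply: HN; exact: maxl (leqnn _).
Qed.


Lemma H_lc : locally_compact opH.
Proof.
move=> x; exists (fun y => W e0 (y - x)); split; first exact: compact_shift hH W_compact.
apply/Hnbhd; exists e0; split; first (rewrite /e0; lra); split; first (rewrite /e0; lra).
by move=> k Wk; rewrite addrC addKr.
Qed.

Lemma LCA_H : LCA_group opH.
Proof. split; first exact: hH. split; first exact: Hhaus. exact: H_lc. Qed.

Lemma Lt_sub : subgroup (Ltilde L phi).
Proof.
split; first by split; [exact: subX0 hL| rewrite /= phi0].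
move=> [x1 x2] [y1 y2] [/= Lx Ex] [/= Ly Ey]; split=> /=.
  by case: hL => _; apply.
by rewrite phiB // Ex Ey.
Qed.

Lemma hG_top : group_topology opG. Proof. by case: hG. Qed.

Lemma sepG (s : list G) : exists O, opG O /\ O 0 /\
  forall z, List.In z s -> z <> 0 -> ~ O z.
Proof.
move: hG => [[[_ [oT [_ capo]]] _] [haus _]].
elim: s => [|z s [O [oO [O0 HO]]]].
  by exists (fun _ => True); split=> //; split=> // z [].
case: (classic (z = 0)) => [z0|z0].
  exists O; split=> //; split=> // w [<-|Hw] //; exact: HO.
have [U [V [[U' [oU' [U'0 U'U]]] [nV UV]]]] := haus 0 z (fun e => z0 (esym e)).
exists (fun y => O y /\ U' y); split; first exact: capo.
split=> // w [<-|Hw] w0 [Ow U'w].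
  exact: UV _ (U'U _ U'w) (nbhd_pt nV).
exact: HO w Hw w0 Ow.
Qed.

Lemma Lt_discrete : discrete (prod_top opG opH) (Ltilde L phi).
Proof.
move: hG => [hGt [haus lc]].
have [K [cK [V [oV [V0 VK]]]]] := lc 0.
have [s Hs] := A2 (e := Rdiv C 2) ltac:(lra) ltac:(lra) cK.
have [O [oO [O0 HO]]] := sepG s.
move: hGt => [[_ [_ [_ capo]]] _].
pose OG := fun y => V y /\ O y.
have oOG : opG OG by apply: capo.
have OGP : forall z, P (Rdiv C 2) z -> OG z -> z = 0.
  move=> z Pz [Vz Oz]; apply: NNPP => z0; apply: (HO z) => //.
  by apply: Hs => //; apply: VK.
have [VH [[OH [oOH [OH0 OHV]]] HVH]] := unif2 (e := Rdiv C 2) ltac:(lra) ltac:(lra).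
move=> [x hx] [/= Lx ->].
exists (fun q : G * H => OG (q.1 + - x) /\ OH (q.2 + - phi x)).
split.
  move=> [a b] /= [Oa Ob].
  exists (fun a => OG (a + - x)), (fun b => OH (b + - phi x)).
  split; first exact: open_shift hG_top oOG.
  split; first exact: open_shift hH oOH.
  by do 2 (split=> //).
split; first by rewrite /= !subrr.
move=> [t ht] /= [Ot Oht] [/= Lt Eht]; subst ht.
have Ltx : L (t - x) by case: hL => _; apply.
have tx0 : t - x = 0.
  apply: OGP => //; apply: HVH => //; apply: OHV; by rewrite phiB.
by rewrite (subr0_eq tx0).
Qed.

Lemma Lt_reldense : relatively_dense (prod_top opG opH) (Ltilde L phi).
Proof.
have [KG [cKG KGc]] := A4 (e := Rdiv C 8) ltac:(lra) ltac:(lra).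
move: hG => [[tG _] _].
exists (fun q : G * H => KG q.1 /\ W e0 q.2); split.
  exact: prod_compact tG cKG W_compact.
move=> [g h].
have nN : nbhd opH h (fun y => W (Rdiv C 8) (h - y)).
  apply/Hnbhd; exists (Rdiv C 8); split; first lra; split; first lra.
  by move=> k Wk; rewrite opprD addNKr; apply: WN => //; lra.
have [O [oO [Oh ON]]] := nN.
have [y [Oy [t [Lt Ey]]]] := phi_dense oO (ex_intro _ h Oh).
subst y.
have [a [k [Pa [Kk Eg]]]] := KGc (g - t).
have La : L a by apply: (A5 (e := Rdiv C 8)) => //; lra.
have Lta : L (t + a) by apply: subXD.
exists (t + a, phi (t + a)), (k, h - phi (t + a)).
split; first by split.
split.
  split=> //=.
  have -> : h - phi (t + a) = (h - phi t) + phi (- a).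
    by rewrite phiD // phiN // opprD addrA.
  have -> : e0 = Rplus (Rdiv C 8) (Rdiv C 8) by rewrite /e0; lra.
  apply: WD; try lra; first exact: ON.
  by apply: W_phi; apply: PN => //; lra.
have E1 : g = t + a + k by rewrite -addrA -Eg addrC subrK.
have E2 : h = phi (t + a) + (h - phi (t + a)) by rewrite addrC subrK.
by rewrite {1}E1 {1}E2.
Qed.

End P3.

Unset Implicit Arguments.
Theorem theorem2p9 (G : zmodType) (opG : set G -> Prop) (C : R)
  (P : R -> set G) (L : set G) :
  LCA_group opG -> sigma_compact opG -> Rlt 0 C -> subgroup L ->
  (* (A1) *)
  (forall e, Rlt 0 e -> Rlt e C -> P e 0 /\ forall x, P e x <-> P e (- x)) ->
  (* (A2) *)
  (forall e, Rlt 0 e -> Rlt e C -> locally_finite opG (P e)) ->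
  (* (A3) *)
  (forall e e', Rlt 0 e -> Rlt 0 e' -> Rlt (Rplus e e') C ->
     forall x y, P e x -> P e' y -> P (Rplus e e') (x + y)) ->
  (* (A4) *)
  (forall e, Rlt 0 e -> Rlt e C -> relatively_dense opG (P e)) ->
  (* (A5) *)
  (forall e, Rlt 0 e -> Rlt e C -> forall x, P e x -> L x) ->
  (* unique group topology on L with {P e} as nbhd basis of 0 *)
  ((exists opL, P_topology C P L opL) /\
   (forall opL opL', P_topology C P L opL -> P_topology C P L opL' ->
      forall U, opL U <-> opL' U)) /\
  (* the completion exists *)
  (exists (H : zmodType) (opH : set H -> Prop) (phi : G -> H),
      is_completion C P L opH phi) /\
  (* and any completion has the stated properties *)
  (forall (H : zmodType) (opH : set H -> Prop) (phi : G -> H),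
      is_completion C P L opH phi ->
      LCA_group opH /\
      lattice (prod_top opG opH) (Ltilde L phi) /\
      cut_and_project opG opH (Ltilde L phi) /\
      (forall x, (exists y, Ltilde L phi (x, y)) <-> L x) /\
      (forall x y, Ltilde L phi (x, y) -> y = phi x)).

Proof.
move=> hG sc C0 hL A1 A2 A3 A4 A5.
have P0 : forall e, Rlt 0 e -> Rlt e C -> P e 0 by move=> e e0 eC; case: (A1 e e0 eC).
have PN : forall e, Rlt 0 e -> Rlt e C -> forall x, P e x -> P e (- x).
  by move=> e e0 eC x; case: (A1 e e0 eC) => _ ->.
split; first by apply: part1.
split; first by apply: completion_exists.
move=> H opH phi hc.
have LH : LCA_group opH by apply: (@LCA_H G opG C P L); eassumption.
have Lat : lattice (prod_top opG opH) (Ltilde L phi).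
  split; first by apply: (@Lt_sub G C P L); eassumption.
  split; first by apply: (@Lt_discrete G opG C P L); eassumption.
  by apply: (@Lt_reldense G opG C P L); eassumption.
split=> //; split=> //; split.
  split=> //; split=> //; split=> //; split.
    by move=> [x1 x2] [y1 y2] [/= _ ->] [/= _ ->] /= ->.
  move=> U oU nU; have [y [Uy [t [Lt Ey]]]] := @phi_dense G C P L H opH phi hc U oU nU.
  by exists y; split=> //; exists t; split.
split; first by move=> x; split; [move=> [y []]|move=> Lx; exists (phi x); split].
by move=> x y [].
Qed.
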